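(* Fix the uniform prior $P$ on $\{1,\dots,n\}^T$, a nonnegative utility function $u:\mathcal{Z}\times\mathcal{H}\to\mathbb{R}_+$, an amplitude $\lambda\ge0$ and a decay $\gamma\in(0,1)$. If Adaptive Sampling SGD is run for $T$ iterations, its posterior $Q$ satisfies $$D_{KL}(Q\|P)\le\frac{\lambda}{1-\gamma}\sum_{t=1}^{T-1}\mathbb{E}_{(i_1,\dots,i_t)\sim Q}\big[u(z_{i_t},h_t)\big].$$
   Context: Adaptive Sampling SGD: inputs are examples $(z_1,\dots,z_n)\in\mathcal{Z}^n$, an initial hypothesis $h_0\in\mathcal{H}$, update rules $G_t:\mathcal{H}\times\mathcal{Z}\to\mathcal{H}$, utility $u$, amplitude $\lambda$, decay $\gamma$. Initialize weights $w_1=\dots=w_n=1$. For $t=1,\dots,T$: draw $i_t$ with conditional probability $Q(i_t=i\mid i_1,\dots,i_{t-1})=w_i/\sum_{j=1}^nw_j$; set $h_t=G_t(h_{t-1},z_{i_t})$; update $w_{i_t}\leftarrow w_{i_t}^{\gamma}\exp(\lambda u(z_{i_t},h_t))$. Output $h_T$. The posterior $Q$ is the resulting distribution of $(i_1,\dots,i_T)$ on $\{1,\dots,n\}^T$ (so $h_t$ is a function of $(i_1,\dots,i_t)$); $D_{KL}(Q\|P)=\mathbb{E}_{Q}\ln(Q/P)$. *)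

(* Defs.v *)
From Stdlib Require Import Reals List.
Import ListNotations.
Open Scope R_scope.

(* Indices of examples are 0..n-1 (the paper's 1..n, shifted).
   Iterations are numbered t = 1..T as in the paper. *)

Fixpoint rsum (n : nat) (f : nat -> R) : R :=
  match n with O => 0 | S m => rsum m f + f m end.

(* state of the algorithm: weights (w_j)_j and current hypothesis *)
Definition state (H : Type) : Type := ((nat -> R) * H)%type.

Definition step {Z H : Type} (G : nat -> H -> Z -> H) (z : nat -> Z)
  (u : Z -> H -> R) (lam gam : R) (t : nat) (st : state H) (i : nat) : state H :=
  let h := G t (snd st) (z i) in
  let w := fst st in
  ((fun j => if Nat.eqb j i then Rpower (w i) gam * exp (lam * u (z i) h) else w j), h).

Fixpoint run_from {Z H : Type} (G : nat -> H -> Z -> H) (z : nat -> Z)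
  (u : Z -> H -> R) (lam gam : R) (t : nat) (st : state H) (s : list nat) : state H :=
  match s with
  | [] => st
  | i :: s' => run_from G z u lam gam (S t) (step G z u lam gam t st i) s'
  end.

Fixpoint qprob_from {Z H : Type} (n : nat) (G : nat -> H -> Z -> H) (z : nat -> Z)
  (u : Z -> H -> R) (lam gam : R) (t : nat) (st : state H) (s : list nat) : R :=
  match s with
  | [] => 1
  | i :: s' => (fst st i / rsum n (fst st)) *
               qprob_from n G z u lam gam (S t) (step G z u lam gam t st i) s'
  end.

Definition init_state {H : Type} (h0 : H) : state H := (fun _ => 1, h0).

Definition Q {Z H : Type} (n : nat) (G : nat -> H -> Z -> H) (z : nat -> Z)
  (u : Z -> H -> R) (lam gam : R) (h0 : H) (s : list nat) : R :=
  qprob_from n G z u lam gam 1 (init_state h0) s.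

Definition hyp {Z H : Type} (G : nat -> H -> Z -> H) (z : nat -> Z)
  (u : Z -> H -> R) (lam gam : R) (h0 : H) (prefix : list nat) : H :=
  snd (run_from G z u lam gam 1 (init_state h0) prefix).

Fixpoint seqs (n T : nat) : list (list nat) :=
  match T with
  | O => [[]]
  | S T' => flat_map (fun i => map (cons i) (seqs n T')) (seq 0 n)
  end.

Definition expect (l : list (list nat)) (p : list nat -> R) (f : list nat -> R) : R :=
  fold_right Rplus 0 (map (fun s => p s * f s) l).

Definition uniform_prior (n T : nat) (s : list nat) : R := / (INR n ^ T).

Definition KL (n T : nat) (q p : list nat -> R) : R :=
  expect (seqs n T) q (fun s => ln (q s / p s)).

(* Main.v *)
Require Import Defs.
From Stdlib Require Import Reals List Lra Lia.
Import ListNotations.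
Open Scope R_scope.

Lemma ln_le' x y : 0 < x -> x <= y -> ln x <= ln y.
Proof. intros Hx [H|H]. left; now apply ln_increasing. subst; lra. Qed.

Lemma ln_ge0 x : 1 <= x -> 0 <= ln x.
Proof. intros; rewrite <- ln_1; apply ln_le'; lra. Qed.

Lemma exp_ge1 x : 0 <= x -> 1 <= exp x.
Proof. intros; pose proof (exp_ineq1_le x); lra. Qed.

Lemma rsum_ext m f g : (forall j, (j < m)%nat -> f j = g j) -> rsum m f = rsum m g.
Proof.
  induction m; simpl; intros; auto.
  rewrite IHm by (intros; apply H; lia). rewrite H by lia. auto.
Qed.

Lemma rsum_upd m f i c : (i < m)%nat ->
  rsum m (fun j => if Nat.eqb j i then c else f j) = rsum m f - f i + c.
Proof.
  induction m; simpl; intros. lia.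
  destruct (Nat.eq_dec i m).
  - subst. rewrite Nat.eqb_refl.
    rewrite (rsum_ext m _ f). lra.
    intros j Hj. destruct (Nat.eqb_spec j m); [lia|auto].
  - rewrite IHm by lia. destruct (Nat.eqb_spec m i); [lia|]. lra.
Qed.

Lemma rsum_ge_n m f : (forall j, 1 <= f j) -> INR m <= rsum m f.
Proof. induction m; intros. simpl; lra. rewrite S_INR; simpl rsum. pose proof (H m); pose proof (IHm H); lra. Qed.

Lemma rsum_ge0 m f : (forall j, 0 <= f j) -> 0 <= rsum m f.
Proof. induction m; intros; simpl. lra. pose proof (H m); pose proof (IHm H); lra. Qed.

Lemma rsum_ge_term m f i : (forall j, 0 <= f j) -> (i < m)%nat -> f i <= rsum m f.
Proof.
  induction m; intros; simpl. lia.
  destruct (Nat.eq_dec i m). subst. pose proof (rsum_ge0 m f H); lra.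
  pose proof (IHm H ltac:(lia)); pose proof (H m); lra.
Qed.

Section Main.
Variables (Z H : Type) (n : nat) (z : nat -> Z) (G : nat -> H -> Z -> H)
  (u : Z -> H -> R) (lam gam : R)
  (hu : forall (x : Z) (h : H), 0 <= u x h)
  (hlam : 0 <= lam) (hgam0 : 0 < gam) (hgam1 : gam < 1).

Definition good (st : state H) := forall j, 1 <= fst st j.

Lemma step_good t st i : good st -> good (step G z u lam gam t st i).
Proof.
  intros Hg j; unfold step; simpl.
  destruct (Nat.eqb j i); [|apply Hg].
  assert (1 <= Rpower (fst st i) gam).
  { unfold Rpower. apply exp_ge1. pose proof (ln_ge0 _ (Hg i)). nra. }
  assert (1 <= exp (lam * u (z i) (G t (snd st) (z i)))).
  { apply exp_ge1. pose proof (hu (z i) (G t (snd st) (z i))). nra. }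
  nra.
Qed.

Definition Spot (st : state H) := rsum n (fun j => ln (fst st j)).

Lemma Spot_step t st i : good st -> (i < n)%nat ->
  Spot (step G z u lam gam t st i) = Spot st + (gam - 1) * ln (fst st i)
     + lam * u (z i) (snd (step G z u lam gam t st i)).
Proof.
  intros Hg Hi. unfold Spot, step; simpl.
  rewrite (rsum_ext n _ (fun j => if Nat.eqb j i then
     ln (Rpower (fst st i) gam * exp (lam * u (z i) (G t (snd st) (z i)))) else ln (fst st j))).
  2:{ intros j _. destruct (Nat.eqb j i); auto. }
  rewrite rsum_upd by auto.
  assert (0 < fst st i) by (pose proof (Hg i); lra).
  rewrite ln_mult by (unfold Rpower; apply exp_pos). rewrite ln_Rpower, ln_exp. ring.
Qed.

Fixpoint Bsum t (st : state H) (s : list nat) : R :=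
  match s with
  | [] => 0
  | i :: s' => match s' with
     | [] => 0
     | _ => u (z i) (snd (step G z u lam gam t st i)) + Bsum (S t) (step G z u lam gam t st i) s'
     end
  end.

Lemma qpos t st s : good st -> Forall (fun i => (i < n)%nat) s ->
  0 < qprob_from n G z u lam gam t st s.
Proof.
  revert t st; induction s as [|i s IH]; intros t st Hg Hf; simpl. lra.
  inversion Hf; subst.
  assert (INR n <= rsum n (fst st)) by (apply rsum_ge_n; auto).
  assert (1 <= INR n) by (apply (le_INR 1); lia).
  pose proof (Hg i).
  apply Rmult_lt_0_compat. apply Rdiv_lt_0_compat; lra.
  apply IH; auto. apply step_good; auto.
Qed.

Lemma main_bound t st s : good st -> Forall (fun i => (i < n)%nat) s ->
  ln (INR n ^ length s * qprob_from n G z u lam gam t st s)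
  <= (lam * Bsum t st s + Spot st) / (1 - gam).
Proof.
  revert t st; induction s as [|i s IH]; intros t st Hg Hf.
  - simpl. rewrite Rmult_1_l, ln_1. unfold Spot.
    assert (0 <= rsum n (fun j => ln (fst st j))) by (apply rsum_ge0; intros; apply ln_ge0; auto).
    unfold Rdiv; apply Rmult_le_pos; [lra| left; apply Rinv_0_lt_compat; lra].
  - inversion Hf as [|? ? Hi Hs]; subst.
    assert (HW : INR n <= rsum n (fst st)) by (apply rsum_ge_n; auto).
    assert (Hn : 1 <= INR n) by (apply (le_INR 1); lia).
    pose proof (Hg i) as Hwi.
    set (st' := step G z u lam gam t st i).
    assert (Hg' : good st') by (apply step_good; auto).
    pose proof (qpos (S t) st' s Hg' Hs) as Hq.
    simpl length; simpl qprob_from. fold st'.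
    replace (INR n ^ S (length s) * (fst st i / rsum n (fst st) * qprob_from n G z u lam gam (S t) st' s))
      with ((INR n * fst st i / rsum n (fst st)) * (INR n ^ length s * qprob_from n G z u lam gam (S t) st' s))
      by (simpl; field; lra).
    assert (Hpn : 0 < INR n ^ length s) by (apply pow_lt; lra).
    rewrite ln_mult; [| apply Rdiv_lt_0_compat; nra | nra].
    assert (Ha : ln (INR n * fst st i / rsum n (fst st)) <= ln (fst st i)).
    { apply ln_le'. apply Rdiv_lt_0_compat; nra.
      apply (Rmult_le_reg_r (rsum n (fst st))). lra.
      unfold Rdiv; rewrite Rmult_assoc, Rinv_l by lra. nra. }
    assert (HaS : ln (fst st i) <= Spot st).
    { unfold Spot. apply (rsum_ge_term n (fun j => ln (fst st j))); auto.
      intros; apply ln_ge0; auto. }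
    assert (HS0 : 0 <= ln (fst st i)) by (apply ln_ge0; auto).
    destruct s as [|k s'].
    + simpl. rewrite Rmult_1_l, ln_1.
      assert (Hinv : 1 <= / (1 - gam)) by (rewrite <- Rinv_1; apply Rinv_le_contravar; lra).
      unfold Rdiv. nra.
    + pose proof (IH (S t) st' Hg' Hs) as IH'.
      pose proof (Spot_step t st i Hg Hi) as Esp. fold st' in Esp. rewrite Esp in IH'.
      change (Bsum t st (i :: k :: s')) with
        (u (z i) (snd st') + Bsum (S t) st' (k :: s')).
      set (B := Bsum (S t) st' (k :: s')) in *.
      set (a := ln (fst st i)) in *.
      set (L := ln (INR n ^ length (k :: s') * qprob_from n G z u lam gam (S t) st' (k :: s'))) in *.
      set (b := u (z i) (snd st')) in *.
      assert (E : a + (lam * B + (Spot st + (gam - 1) * a + lam * b)) / (1 - gam)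
                  = (lam * (b + B) + Spot st) / (1 - gam)) by (field; lra).
      lra.
Qed.
End Main.

Lemma Bsum_fold (Z H : Type) (z : nat -> Z) (G : nat -> H -> Z -> H)
  (u : Z -> H -> R) (lam gam : R) t0 st s :
  Bsum Z H z G u lam gam t0 st s = fold_right Rplus 0 (map (fun k =>
    u (z (nth (k-1) s 0%nat)) (snd (run_from G z u lam gam t0 st (firstn k s))))
    (seq 1 (length s - 1))).
Proof.
  revert t0 st; induction s as [|i s IH]; intros t0 st. reflexivity.
  destruct s as [|k s']. reflexivity.
  change (Bsum Z H z G u lam gam t0 st (i :: k :: s')) with
    (u (z i) (snd (step G z u lam gam t0 st i)) + Bsum Z H z G u lam gam (S t0) (step G z u lam gam t0 st i) (k :: s')).
  rewrite IH. simpl length. replace (S (S (length s')) - 1)%nat with (S (length s')) by lia.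
  replace (S (length s') - 1)%nat with (length s') by lia.
  cbn [seq]. rewrite <- (seq_shift (length s') 1). cbn [map fold_right]. rewrite map_map. simpl map. simpl fold_right. f_equal.
  f_equal. apply map_ext_in. intros x Hx. apply in_seq in Hx.
  destruct x as [|y]. lia. simpl. rewrite Nat.sub_0_r. reflexivity.
Qed.

Lemma seqs_spec n T s : In s (seqs n T) -> length s = T /\ Forall (fun i => (i < n)%nat) s.
Proof.
  revert s; induction T; intros s Hs; simpl in Hs.
  - destruct Hs as [<-|[]]. simpl; auto.
  - apply in_flat_map in Hs as [i [Hi Hm]]. apply in_map_iff in Hm as [s' [<- Hs']].
    apply in_seq in Hi. destruct (IHT s' Hs'). simpl; split; auto. constructor; auto; lia.
Qed.

Lemma expect_le l p f g : (forall s, In s l -> p s * f s <= p s * g s) ->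
  expect l p f <= expect l p g.
Proof.
  unfold expect; induction l; simpl; intros. lra.
  pose proof (H a (or_introl eq_refl)). pose proof (IHl (fun s Hs => H s (or_intror Hs))). lra.
Qed.

Lemma expect_plus l p f g : expect l p (fun s => f s + g s) = expect l p f + expect l p g.
Proof. unfold expect; induction l; simpl. lra. rewrite IHl. ring. Qed.

Lemma expect_scal l p c f : expect l p (fun s => c * f s) = c * expect l p f.
Proof. unfold expect; induction l; simpl. lra. rewrite IHl. ring. Qed.

Lemma expect_fold {A} l p (F : A -> list nat -> R) (L : list A) :
  expect l p (fun s => fold_right Rplus 0 (map (fun t => F t s) L))
  = fold_right Rplus 0 (map (fun t => expect l p (F t)) L).
Proof.
  induction L; simpl.
  - unfold expect; induction l; simpl; [lra|]. rewrite IHl; ring.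
  - rewrite expect_plus, IHL. reflexivity.
Qed.

Theorem theorem5 (Z H : Type) (n T : nat) (z : nat -> Z) (h0 : H)
  (G : nat -> H -> Z -> H) (u : Z -> H -> R) (lam gam : R)
  (hu : forall (x : Z) (h : H), 0 <= u x h)
  (hlam : 0 <= lam) (hgam0 : 0 < gam) (hgam1 : gam < 1) :
  KL n T (Q n G z u lam gam h0) (uniform_prior n T)
  <= lam / (1 - gam) *
     fold_right Rplus 0
       (map (fun t =>
          expect (seqs n T) (Q n G z u lam gam h0)
            (fun s => u (z (nth (t - 1) s 0%nat))
                        (hyp G z u lam gam h0 (firstn t s))))
        (seq 1 (T - 1))).
Proof.
  rewrite <- expect_fold, <- expect_scal. unfold KL.
  apply expect_le. intros s Hs. apply seqs_spec in Hs as [Hl Hf].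
  assert (Hg : good H (init_state h0)) by (intro j; simpl; lra).
  pose proof (qpos Z H n z G u lam gam hu hlam hgam0 hgam1 1 (init_state h0) s Hg Hf) as Hq.
  pose proof (main_bound Z H n z G u lam gam hu hlam hgam0 hgam1 1 (init_state h0) s Hg Hf) as Hb.
  unfold Q. apply Rmult_le_compat_l. lra.
  unfold uniform_prior. unfold Rdiv at 1. rewrite Rinv_inv.
  rewrite Rmult_comm, <- Hl.
  eapply Rle_trans. apply Hb.
  assert (Spot H n (init_state h0) = 0).
  { unfold Spot. simpl. rewrite ln_1. clear. induction n; simpl; lra. }
  rewrite H0, Bsum_fold, Hl. unfold hyp. lra.
Qed.
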